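(* Let $\alpha\in(0,1]$. For $x\geqslant1$ define the sequence $\{z_k(x)\}_{k\geqslant-1}$ by $z_{-1}(x)=1$, $z_0(x)=x$ and $$\alpha z_{k+1}-z_k+\frac1{z_k}+(1-\alpha)z_{k-1}-\frac1{z_{k-1}}=0\qquad(k\geqslant0).$$ Then for every $k\geqslant0$, $z_k(x)$ is well defined (i.e. no division by zero occurs) for all $x\geqslant1$, $z_k$ is a strictly increasing smooth function of $x$ on $[1,\infty)$, $z_k(1)=1$, and $z_k(x)\to\infty$ as $x\to\infty$. *)

(* Defs.v *)
From Stdlib Require Import Reals.
From Coquelicot Require Import Coquelicot.
Open Scope R_scope.

(* zpair alpha n x = (z_{n-1}(x), z_n(x)), for n >= 0.
   Initial values z_{-1}(x) = 1, z_0(x) = x; the recurrence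
     alpha z_{k+1} - z_k + 1/z_k + (1-alpha) z_{k-1} - 1/z_{k-1} = 0
   solved for z_{k+1}:
     z_{k+1} = (z_k - 1/z_k - (1-alpha) z_{k-1} + 1/z_{k-1}) / alpha.
   Division is total in Stdlib (x/0 unspecified); the theorem asserts that
   the denominators z_k(x) never vanish for x >= 1. *)
Fixpoint zpair (alpha : R) (n : nat) (x : R) : R * R :=
  match n with
  | O => (1, x)
  | S m =>
      let p := zpair alpha m x in
      let zprev := fst p in
      let zk := snd p in
      (zk, (zk - / zk - (1 - alpha) * zprev + / zprev) / alpha)
  end.

Definition z (alpha : R) (k : nat) (x : R) : R := snd (zpair alpha k x).

(* Main.v *)
Require Import Defs.
From Stdlib Require Import Reals Lra Lia.
From Coquelicot Require Import Coquelicot.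
Open Scope R_scope.

Fixpoint smooth_n (U : R -> Prop) (n : nat) (f : R -> R) : Prop :=
  match n with
  | O => True
  | S m => (forall x, U x -> ex_derive f x) /\ smooth_n U m (Derive f)
  end.

Lemma smooth_ext U (HU : open U) n : forall f g,
  (forall x, U x -> f x = g x) -> smooth_n U n f -> smooth_n U n g.
Proof.
  induction n as [|n IH]; simpl; auto.
  intros f g Hfg [H1 H2]; split.
  - intros x Hx. apply (ex_derive_ext_loc f g x); [|now apply H1].
    apply (filter_imp U); [|now apply HU]. intros; now apply Hfg.
  - apply (IH (Derive f)); auto. intros x Hx. apply Derive_ext_loc.
    apply (filter_imp U); [|now apply HU]. intros; now apply Hfg.
Qed.

Lemma smooth_restr U V (HVU : forall x, V x -> U x) n : forall f,
  smooth_n U n f -> smooth_n V n f.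
Proof.
  induction n as [|n IH]; simpl; auto.
  intros f [H1 H2]; split; auto.
Qed.

Lemma smooth_mono U n : forall f, smooth_n U (S n) f -> smooth_n U n f.
Proof.
  induction n as [|n IH]; simpl; auto.
  intros f [H1 H2]; split; auto.
Qed.

Lemma smooth_ex U n f x : smooth_n U (S n) f -> U x -> ex_derive_n f (S n) x.
Proof.
  revert f; induction n as [|n IH]; intros f Hf Hx.
  - simpl in *. destruct Hf as [H _]. now apply H.
  - destruct Hf as [H1 H2]. specialize (IH (Derive f) H2 Hx).
    simpl in IH |- *.
    eapply ex_derive_ext; [|exact IH]. intros t.
    pose proof (Derive_n_comp f n 1 t) as E. simpl in E.
    replace (n + 1)%nat with (S n) in E by lia. simpl in E. rewrite <- E.
    apply Derive_n_ext. intros u. reflexivity.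
Qed.

Lemma smooth_const U (HU : open U) n : forall c, smooth_n U n (fun _ => c).
Proof.
  induction n as [|n IH]; simpl; auto. intros c; split.
  - intros; apply ex_derive_const.
  - apply (smooth_ext U HU n (fun _ => 0)); auto.
    intros; now rewrite Derive_const.
Qed.

Lemma smooth_id U (HU : open U) n : smooth_n U n (fun x => x).
Proof.
  destruct n as [|n]; simpl; auto. split.
  - intros; apply ex_derive_id.
  - apply (smooth_ext U HU n (fun _ => 1)); [|apply smooth_const; auto].
    intros x _; symmetry; apply (Derive_id x).
Qed.

Lemma smooth_plus U (HU : open U) n : forall f g,
  smooth_n U n f -> smooth_n U n g -> smooth_n U n (fun x => f x + g x).
Proof.
  induction n as [|n IH]; simpl; auto.
  intros f g [Hf1 Hf2] [Hg1 Hg2]; split.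
  - intros x Hx. apply (ex_derive_plus f g x); auto.
  - apply (smooth_ext U HU n (fun x => Derive f x + Derive g x)); auto.
    intros x Hx. rewrite Derive_plus; auto.
Qed.

Lemma smooth_mult U (HU : open U) n : forall f g,
  smooth_n U n f -> smooth_n U n g -> smooth_n U n (fun x => f x * g x).
Proof.
  induction n as [|n IH]; auto.
  intros f g Hf Hg. pose proof (smooth_mono U n f Hf) as Hf0.
  pose proof (smooth_mono U n g Hg) as Hg0.
  destruct Hf as [Hf1 Hf2]; destruct Hg as [Hg1 Hg2]; split.
  - intros x Hx. apply (ex_derive_mult f g x); auto.
  - apply (smooth_ext U HU n (fun x => Derive f x * g x + f x * Derive g x)).
    + intros x Hx. rewrite Derive_mult; auto.
    + apply smooth_plus; auto.
Qed.

Lemma smooth_inv U (HU : open U) n : forall f, (forall x, U x -> f x <> 0) ->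
  smooth_n U n f -> smooth_n U n (fun x => / f x).
Proof.
  induction n as [|n IH]; auto.
  intros f Hnz Hf. pose proof (smooth_mono U n f Hf) as Hf0.
  destruct Hf as [Hf1 Hf2]; split.
  - intros x Hx. apply ex_derive_inv; auto.
  - apply (smooth_ext U HU n (fun x => (fun _ => -1) x * Derive f x * (/ f x * / f x))).
    + intros x Hx. rewrite Derive_inv; auto. field. auto.
    + apply (smooth_mult U HU); [apply (smooth_mult U HU); auto; apply smooth_const; auto|apply (smooth_mult U HU); apply IH; auto].
Qed.

Lemma zpair_inv alpha (ha : alpha <> 0) k x :
  alpha * snd (zpair alpha k x) =
  (1 - alpha) * fst (zpair alpha k x) - / fst (zpair alpha k x) + alpha * (x + 1).
Proof.
  induction k as [|k IH]; simpl.
  - rewrite Rinv_1. ring.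
  - destruct (zpair alpha k x) as [a b]; simpl in *.
    replace (alpha * ((b - / b - (1 - alpha) * a + / a) / alpha))
      with (b - / b - (1 - alpha) * a + / a).
    2:{ set (ia := / a). set (ib := / b). field. exact ha. }
    lra.
Qed.

Lemma z_S alpha (ha : alpha <> 0) k x :
  z alpha (S k) x = ((1 - alpha) * z alpha k x - / z alpha k x) / alpha + x + 1.
Proof.
  unfold z. pose proof (zpair_inv alpha ha (S k) x) as H.
  simpl in H |- *. destruct (zpair alpha k x) as [a b]; simpl in *.
  apply (Rmult_eq_reg_l alpha); auto. rewrite H. set (ia := / a). set (ib := / b). field; auto.
Qed.

Lemma zpair_bound alpha (ha : 0 < alpha <= 1) k x : 1 <= x ->
  1 <= fst (zpair alpha k x) <= snd (zpair alpha k x) /\ x <= snd (zpair alpha k x).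
Proof.
  intros Hx. induction k as [|k IH]; simpl; [lra|].
  destruct (zpair alpha k x) as [a b]; simpl in *.
  assert (Hab : / b <= / a) by (apply Rinv_le_contravar; lra).
  assert (b <= (b - / b - (1 - alpha) * a + / a) / alpha).
  { apply (Rmult_le_reg_l alpha); [lra|].
    replace (alpha * ((b - / b - (1 - alpha) * a + / a) / alpha))
      with (b - / b - (1 - alpha) * a + / a) by (field; lra).
    assert ((1 - alpha) * a <= (1 - alpha) * b) by (apply Rmult_le_compat_l; lra).
    lra. }
  lra.
Qed.

Lemma z_ge alpha (ha : 0 < alpha <= 1) k x : 1 <= x -> 1 <= z alpha k x /\ x <= z alpha k x.
Proof. intros Hx. unfold z. pose proof (zpair_bound alpha ha k x Hx). lra. Qed.

Lemma z_one alpha (ha : 0 < alpha <= 1) k : zpair alpha k 1 = (1, 1).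
Proof.
  induction k as [|k IH]; simpl; auto. rewrite IH; simpl. f_equal.
  rewrite Rinv_1. field. lra.
Qed.

Lemma z_mono alpha (ha : 0 < alpha <= 1) k x y : 1 <= x -> x < y -> z alpha k x < z alpha k y.
Proof.
  intros Hx Hxy. induction k as [|k IH].
  - unfold z; simpl; lra.
  - assert (ha0 : alpha <> 0) by lra.
    rewrite !(z_S alpha ha0).
    pose proof (z_ge alpha ha k x Hx).
    assert (/ z alpha k y <= / z alpha k x) by (apply Rinv_le_contravar; lra).
    assert ((1 - alpha) * z alpha k x <= (1 - alpha) * z alpha k y)
      by (apply Rmult_le_compat_l; lra).
    assert (((1 - alpha) * z alpha k x - / z alpha k x) / alpha <=
            ((1 - alpha) * z alpha k y - / z alpha k y) / alpha).
    { unfold Rdiv. apply Rmult_le_compat_r; [|lra].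
      left; apply Rinv_0_lt_compat; lra. }
    lra.
Qed.

Lemma z_smooth alpha (ha : 0 < alpha <= 1) k :
  exists U : R -> Prop, open U /\ (forall x, 1 <= x -> U x) /\
    (forall x, U x -> 0 < z alpha k x) /\ (forall n, smooth_n U n (z alpha k)).
Proof.
  assert (ha0 : alpha <> 0) by lra.
  induction k as [|k IH].
  - exists (fun x => 0 < x). split; [apply open_gt|]. split; [intros; lra|].
    split; [unfold z; simpl; auto|]. intros n. apply smooth_id, open_gt.
  - destruct IH as [U [HU [H1 [Hpos Hsm]]]].
    assert (HS : forall n, smooth_n U n (z alpha (S k))).
    { intros n.
      apply (smooth_ext U HU n (fun x =>
        ((fun _ => 1 - alpha) x * z alpha k x + (fun _ => -1) x * / z alpha k x)
          * (fun _ => / alpha) x + x + (fun _ => 1) x)).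
      + intros x _. rewrite z_S; auto. simpl. set (iz := / z alpha k x). field. exact ha0.
      + repeat apply smooth_plus; auto; try apply smooth_const; auto;
          try apply smooth_id; auto.
        apply smooth_mult; auto; try apply smooth_const; auto.
        apply smooth_plus; auto; apply smooth_mult; auto; try apply smooth_const; auto.
        apply smooth_inv; auto. intros x Hx. specialize (Hpos x Hx). lra. }
    exists (fun x => U x /\ 0 < z alpha (S k) x). split; [|split; [|split]].
    + intros x [Hx Hz]. apply filter_and; [now apply HU|].
      destruct (HS 1%nat) as [Hd _].
      pose proof (ex_derive_continuous _ _ (Hd x Hx)) as Hc.
      apply (Hc (fun u => 0 < u)). apply (open_gt 0). exact Hz.
    + intros x Hx. split; auto. pose proof (z_ge alpha ha (S k) x Hx). lra.
    + intros x [_ Hx]; auto.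
    + intros n. apply (smooth_restr U); auto. now intros x [].
Qed.

Theorem lemma2 (alpha : R) (halpha : 0 < alpha <= 1) (k : nat) :
  (* well defined: no division by zero (z_{-1} = 1 is trivially nonzero) *)
  (forall x : R, 1 <= x -> z alpha k x <> 0) /\
  (* strictly increasing on [1, oo) *)
  (forall x y : R, 1 <= x -> x < y -> z alpha k x < z alpha k y) /\
  (* smooth on [1, oo): derivatives of every order exist at every x >= 1 *)
  (forall (n : nat) (x : R), 1 <= x -> ex_derive_n (z alpha k) n x) /\
  z alpha k 1 = 1 /\
  is_lim (z alpha k) p_infty p_infty.
Proof.
  split; [|split; [|split; [|split]]].
  - intros x Hx. pose proof (z_ge alpha halpha k x Hx). lra.
  - intros x y Hx Hxy. now apply z_mono.
  - intros n x Hx. destruct n as [|n]; [exact I|].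
    destruct (z_smooth alpha halpha k) as [U [_ [H1 [_ Hs]]]].
    apply (smooth_ex U); auto.
  - unfold z. rewrite z_one; auto.
  - apply (is_lim_le_p_loc (fun y => y)); [|apply is_lim_id].
    exists 1. intros x Hx. apply z_ge; auto. lra.
Qed.
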